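(* Let $\Phi$ be a real, additive gain graph on $\{1,\dots,n\}$ with edge set $E$ and let $\mathbf{Q}\in(\mathbb{E}^d)^n$. If $\mathbf{Q}$ has ideal general position and, for every edge set $S\subseteq E$ that is a forest with $d+1$ edges, $\bigcap_{e\in S}h(e)=\emptyset$ in $\mathcal{H}(\Phi;\mathbf{Q})$, then $\mathbf{Q}$ has general position with respect to $\Phi$.
   Context: A real, additive gain graph $\Phi$ on $V=\{1,\dots,n\}$: finite graph with edge set $E$ (multiple edges allowed, every edge with two distinct endpoints) and gains $\phi(e;i,j)\in\mathbb{R}$ with $\phi(e;j,i)=-\phi(e;i,j)$. $S\subseteq E$ is balanced if every circle in $S$ has gain sum $0$ (read consistently); a forest is an edge set containing no circle; $c(S)$ counts components of $(V,S)$, isolated vertices included. With $\psi_{ij}(P)=d(P,Q_i)^2-d(P,Q_j)^2$, $\mathcal{H}(\Phi;\mathbf{Q})$ consists of the hyperplanes $h(e)=\{P:\psi_{ij}(P)=\phi(e;i,j)\}$ for edges $e$ with endpoints $i,j$. $\mathcal{L}(\mathcal{H})$: nonempty intersections of subsets of $\mathcal{H}$ (including $\mathbb{E}^d$) ordered by reverse inclusion; $E(s)=\{e:h(e)\supseteq s\}$. Ideal general position: the points are distinct and, with $\mathbb{E}^d\subset\mathbb{P}^d$, $h_\infty$ the ideal hyperplane and $p_{ij}$ the ideal point of line $Q_iQ_j$, for every set $T$ of unordered pairs the projective span of $\{p_{ij}:\{i,j\}\in T\}$ has dimension $\min(n-c(T),d)-1$, $c(T)$ being the number of components of $(\{1,\dots,n\},T)$.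 A balanced flat is a balanced $S\subseteq E$ such that every $e\notin S$ with both endpoints in one component of $(V,S)$ makes $S\cup\{e\}$ unbalanced; rank $n-c(S)$. General position with respect to $\Phi$: $s\mapsto E(s)$ is a poset isomorphism from $\mathcal{L}(\mathcal{H}(\Phi;\mathbf{Q}))$ onto the poset (by inclusion) of balanced flats of rank at most $d$. *)

(* Defs.v *)
From HB Require Import structures.
From mathcomp Require Import all_boot all_order all_algebra.
From mathcomp Require Import boolp reals.
Set Implicit Arguments. Unset Strict Implicit. Unset Printing Implicit Defensive.
Import Order.TTheory GRing.Theory Num.Theory.
Local Open Scope ring_scope.

Section GainGraph.
Variables (R : realType) (n d : nat) (E : finType)
          (src dst : E -> 'I_n) (phi : E -> R).
(* An edge e has endpoints src e, dst e and gain phi(e; src e, dst e) = phi e;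
   phi(e; dst e, src e) = - phi e. *)

(* A dart: an edge together with an orientation (true = src -> dst). *)
Definition dtail (a : E * bool) : 'I_n := if a.2 then src a.1 else dst a.1.
Definition dhead (a : E * bool) : 'I_n := if a.2 then dst a.1 else src a.1.
Definition dgain (a : E * bool) : R := if a.2 then phi a.1 else - phi a.1.

Definition circle (S : {set E}) (c : seq (E * bool)) : Prop :=
  [/\ (2 <= size c)%N, uniq (map fst c), {subset map fst c <= S},
      uniq (map dtail c) & cycle (fun a b => dhead a == dtail b) c].

Definition balanced (S : {set E}) : Prop :=
  forall c, circle S c -> \sum_(a <- c) dgain a = 0.

Definition forest (S : {set E}) : Prop := forall c, ~ circle S c.

Definition adjE (S : {set E}) : rel 'I_n :=
  fun i j => [exists e in S, ((src e == i) && (dst e == j))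
                          || ((src e == j) && (dst e == i))].
Definition ncompE (S : {set E}) : nat := n_comp (adjE S) predT.
Definition rankE (S : {set E}) : nat := (n - ncompE S)%N.

Definition balanced_flat (F : {set E}) : Prop :=
  balanced F /\
  forall e, e \notin F -> connect (adjE F) (src e) (dst e) ->
    ~ balanced (e |: F).

Variable Q : 'I_n -> 'rV[R]_d.

Definition sqdist (P X : 'rV[R]_d) : R := \sum_(k < d) (P 0 k - X 0 k) ^+ 2.
Definition psi (i j : 'I_n) (P : 'rV[R]_d) : R := sqdist P (Q i) - sqdist P (Q j).

Definition hyp (e : E) (P : 'rV[R]_d) : Prop := psi (src e) (dst e) P = phi e.

Definition inter (A : {set E}) (P : 'rV[R]_d) : Prop :=
  forall e, e \in A -> hyp e P.

Definition inL (s : 'rV[R]_d -> Prop) : Prop :=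
  (exists P, s P) /\ exists A : {set E}, forall P, s P <-> inter A P.

Definition Eof (s : 'rV[R]_d -> Prop) : {set E} :=
  [set e | `[< forall P, s P -> hyp e P >]].

(* s |-> E(s) is a poset isomorphism from L(H) (reverse inclusion) onto the
   balanced flats of rank <= d (inclusion). *)
Definition general_position : Prop :=
  [/\ (forall s, inL s -> balanced_flat (Eof s) /\ (rankE (Eof s) <= d)%N),
      (forall F, balanced_flat F -> (rankE F <= d)%N ->
         exists s, inL s /\ Eof s = F) &
      (forall s t, inL s -> inL t ->
         ((forall P, t P -> s P) <-> Eof s \subset Eof t))].

End GainGraph.

Section Ideal.
Variables (R : realType) (n d : nat) (Q : 'I_n -> 'rV[R]_d).

(* T : a set of unordered pairs {i,j}, encoded as pairs (i,j) with i < j *)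
Definition ncompT (T : {set 'I_n * 'I_n}) : nat :=
  n_comp (fun i j => ((i, j) \in T) || ((j, i) \in T)) predT.

(* The ideal point p_ij of line Q_iQ_j is the direction Q_j - Q_i; the
   projective span of a set of ideal points has dimension (rank of the
   linear span of the directions) - 1. *)
Definition ideal_general_position : Prop :=
  injective Q /\
  forall T : {set 'I_n * 'I_n}, (forall p, p \in T -> p.1 < p.2)%N ->
    \rank (\sum_(p in T) <<Q p.2 - Q p.1>>)%MS = minn (n - ncompT T) d.

End Ideal.

(* Main.v *)
Require Import Defs.
From HB Require Import structures.
From mathcomp Require Import all_boot all_order all_algebra.
From mathcomp Require Import boolp reals.
From mathcomp Require Import zify ring.
Import Order.TTheory GRing.Theory Num.Theory.
Local Open Scope ring_scope.
Set Implicit Arguments. Unset Strict Implicit. Unset Printing Implicit Defensive.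


Section Graph.
Variables (n : nat) (E : finType) (src dst : E -> 'I_n).
Hypothesis loopless : forall e, src e != dst e.

Implicit Types (S : {set E}) (a : E * bool).
Local Notation adj := (adjE src dst).
Local Notation dtl := (dtail src dst).
Local Notation dhd := (dhead src dst).
Local Notation circ := (circle src dst).
Local Notation Rd := (fun a b : E * bool => dhd a == dtl b).

Lemma adj_sym S : symmetric (adj S).
Proof.
move=> i j; apply/existsP/existsP => -[e He]; exists e;
  by move: He; rewrite orbC.
Qed.

Lemma csym S : connect_sym (adj S).
Proof. exact/sym_connect_sym/adj_sym. Qed.

Lemma adj_mono (A B : {set E}) : A \subset B -> forall x y, adj A x y -> adj B x y.
Proof.
move=> /subsetP AB x y /existsP[e /andP[eA H]]; apply/existsP; exists e.
by rewrite AB.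
Qed.

Lemma connect_mono (A B : {set E}) : A \subset B -> forall x y,
  connect (adj A) x y -> connect (adj B) x y.
Proof.
move=> AB; apply: connect_sub => x y H; apply: connect1; exact: adj_mono H.
Qed.

Lemma adjU1 e S x y : adj (e |: S) x y =
  ((src e == x) && (dst e == y) || (src e == y) && (dst e == x)) || adj S x y.
Proof.
apply/existsP/orP => [[f /andP[]]|].
  rewrite in_setU1 => /orP[/eqP-> H|fS H]; first by left.
  by right; apply/existsP; exists f; rewrite fS.
case=> [H|/existsP[f /andP[fS H]]]; first by exists e; rewrite setU11.
by exists f; rewrite in_setU1 fS orbT.
Qed.

Lemma adj_dart S a : a.1 \in S -> adj S (dtl a) (dhd a).
Proof.
move=> aS; apply/existsP; exists a.1; rewrite aS /dtail /dhead.
by case: a.2; rewrite !eqxx ?orbT.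
Qed.

Lemma path_connect_darts S a0 l : path Rd a0 l -> {subset map fst l <= S} ->
  connect (adj S) (dhd a0) (dhd (last a0 l)).
Proof.
elim: l a0 => //= b l IH a0 /andP[/eqP hb pl] sub.
apply: connect_trans (IH b pl _); last by move=> x xl; apply: sub; rewrite inE xl orbT.
rewrite hb; apply: connect1; apply: adj_dart; apply: sub; exact: mem_head.
Qed.

Lemma darts_of_path S x p : path (adj S) x p -> uniq (x :: p) ->
  exists ds : seq (E * bool),
  [/\ {subset map fst ds <= S}, uniq (map fst ds), map dtl ds = belast x p,
      map dhd ds = p & forall a0, dhd a0 = x -> path Rd a0 ds].
Proof.
elim: p x => [|y p IH] x /=.
  by move=> _ _; exists [::].
move=> /andP[/existsP[f /andP[fS Hf]] pp] /andP[xn up].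
have [ds [sub un tl hd pa]] := IH y pp up.
have [a [a1 atl ahd]] : exists a : E * bool, [/\ a.1 = f, dtl a = x & dhd a = y].
  case/orP: Hf => /andP[/eqP s /eqP d]; [exists (f, true) | exists (f, false)];
  by rewrite /dtail /dhead /= ?s ?d.
exists (a :: ds); split => /=.
- by move=> g; rewrite inE => /orP[/eqP->|/sub //]; rewrite a1.
- rewrite un andbT; apply/negP => /mapP[b bds fb].
  have : (src b.1 \in y :: p) && (dst b.1 \in y :: p).
    have t : dtl b \in y :: p by apply: mem_belast; rewrite -tl map_f.
    have h : dhd b \in y :: p by rewrite inE -hd map_f ?orbT.
    by move: t h; rewrite /dtail /dhead; case: b.2 => -> ->.
  rewrite -fb a1; case/orP: Hf => /andP[/eqP s /eqP d].
    by rewrite s (negbTE xn).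
  by rewrite d (negbTE xn) andbF.
- by rewrite atl tl.
- by rewrite ahd hd.
- by move=> a0 h0; rewrite h0 atl eqxx /=; apply: pa.
Qed.

Lemma circle_of_connect S e : e \notin S ->
  connect (adj S) (src e) (dst e) ->
  exists ds : seq (E * bool),
  [/\ circ (e |: S) ((e, true) :: ds), {subset map fst ds <= S} &
      path Rd (e, true) ds /\ dhd (last (e, true) ds) = src e].
Proof.
move=> eS; rewrite csym => /connectP[p0 pp0 lp0].
case: (shortenP pp0) lp0 => p pp up _ lp.
have [ds [sub un tl hd pa]] := darts_of_path pp up.
have pa' := pa (e, true) erefl.
have lst : dhd (last (e, true) ds) = src e.
  by rewrite -last_map hd /= lp.
exists ds; split => //.
split.
- case: ds {sub un tl pa pa' lst} hd => [|b ds] /= hd; last by [].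
  move: lp; rewrite -hd /= => lp.
  by move: (loopless e); rewrite lp eqxx.
- rewrite /= un andbT; apply/negP => /sub; exact/negP.
- move=> g; rewrite inE => /orP[/eqP->|/sub gS]; first exact: setU11.
  by rewrite in_setU1 gS orbT.
- rewrite /= tl /dtail /=.
  have := up; rewrite lastI rcons_uniq -lp => /andP[-> ->]; by [].
- rewrite /cycle rcons_path pa' /= lst /dtail /=. by [].
Qed.

Lemma forest_sub S S' : forest src dst S -> S' \subset S -> forest src dst S'.
Proof.
move=> fS /subsetP sub c [c1 c2 c3 c4 c5]; apply: (fS c); split => //.
by move=> x /c3 /sub.
Qed.

Lemma forest_add S e : forest src dst S -> e \notin S ->
  ~~ connect (adj S) (src e) (dst e) -> forest src dst (e |: S).
Proof.
move=> fS eS nc c [c1 c2 c3 c4 c5].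
have [ec|nec] := boolP (e \in map fst c); last first.
  apply: (fS c); split => // x xc; have := c3 x xc; rewrite in_setU1.
  by case/orP => // /eqP ex; rewrite -ex xc in nec.
case/mapP: ec => a ac ea.
case: (rot_to ac) => i l rc.
have cyc : cycle Rd (a :: l) by rewrite -rc rot_cycle.
have unf : uniq (map fst (a :: l)) by rewrite -rc map_rot rot_uniq.
have subl : {subset map fst l <= S}.
  move=> x xl; have : x \in map fst c by rewrite -(mem_rot i) -map_rot rc inE xl orbT.
  move/c3; rewrite in_setU1 => /orP[/eqP xe|//].
  by move: unf => /= /andP[]; rewrite -ea -xe xl.
move: cyc; rewrite /cycle rcons_path => /andP[pl /eqP lst].
have := path_connect_darts pl subl; rewrite lst.
rewrite /dtail /dhead -ea; case: a.2 => H; move: nc; first by rewrite csym H.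
by rewrite H.
Qed.


Lemma ncomp0 : ncompE src dst set0 = n.
Proof.
rewrite /ncompE /n_comp_mem -[RHS]card_ord; apply: eq_card => x.
rewrite !inE andbT /roots; apply/eqP; rewrite /fingraph.root.
have cx : forall y, connect (adj set0) x y -> y = x.
  move=> y /connectP[[|z p] /=]; first by [].
  by case/andP => /existsP[f]; rewrite inE.
case: pickP => [y /cx -> //|/(_ x)]; by rewrite connect0.
Qed.

Lemma ncompU1 S e : ncompE src dst S =
  (ncompE src dst (e |: S) + ~~ connect (adj S) (src e) (dst e))%N.
Proof.
set r := adj S; set r' := adj (e |: S); set u := src e; set v := dst e.
have symr := csym S; have symr' := csym (e |: S).
set a := closure r (pred2 u v).
have ua : u \in a by apply: mem_closure; rewrite !inE eqxx.
have va : v \in a by apply: mem_closure; rewrite !inE eqxx orbT.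
have sub : S \subset e |: S by apply/subsetP => x xS; rewrite in_setU1 xS orbT.
have cla' : closed r' a.
  apply: intro_closed => // x y; rewrite /r' adjU1 => /orP[|rxy].
    by case/orP => /andP[/eqP <- /eqP <-].
  by rewrite (closure_closed symr (pred2 u v) rxy).
have clr : closed r a by exact: closure_closed.
have eqa : a =i closure r' (pred2 u v).
  move=> x; apply/idP/idP.
    case/pred0Pn => y /andP[/= cxy py]; apply/pred0Pn; exists y; rewrite /= py andbT.
    exact: connect_mono cxy.
  case/pred0Pn => y /andP[/= cxy py].
  rewrite (closed_connect cla' cxy).
  by case/pred2P: py => ->.
have out : forall x, x \notin a -> connect r x =1 connect r' x.
  move=> x xa y; apply/idP/idP; first exact: connect_mono.
  case/connectP => p pp ->; apply/connectP; exists p => //.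
  elim: p x xa pp => //= z p IH x xa /andP[rxz pz].
  have rxz0 : r x z.
    move: rxz; rewrite /r' adjU1 => /orP[|//].
    by case/orP => /andP[/eqP e1 /eqP e2]; move/negP: xa; [rewrite -e1 | rewrite -e2] => H; exfalso; apply: H.
  rewrite rxz0 /=; apply: IH pz.
  by rewrite -(clr _ _ rxz0).
rewrite /ncompE !(@eq_n_comp_r _ _ predT 'I_n) //.
rewrite (n_compC a r) (n_compC a r').
have h1 : n_comp r a = (~~ connect r u v).+1 := n_comp_closure2 symr u v.
have cuv : connect r' u v by apply: connect1; rewrite /r' adjU1 !eqxx.
have h2 : n_comp r' a = 1%N.
  by rewrite (eq_n_comp_r eqa) (n_comp_closure2 symr') cuv.
rewrite h1 h2.
have -> : n_comp r [predC a] = n_comp r' [predC a].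
  apply: eq_card => x; rewrite !inE; case xa: (x \in a) => /=; rewrite ?andbF ?andbT //.
  by rewrite /roots /fingraph.root (eq_pick (out x (negbT xa))).
by case: (connect r u v) => /=; lia.
Qed.

Lemma forest_count S : forest src dst S -> (ncompE src dst S + #|S| = n)%N.
Proof.
move: {2}#|S| (erefl #|S|) => k; elim: k S => [|k IH] S cS fS.
  by move/eqP: cS; rewrite cards_eq0 => /eqP->; rewrite cards0 ncomp0 addn0.
have [e eS] : exists e, e \in S.
  by apply/set0Pn; rewrite -card_gt0 cS.
have eq : S = e |: (S :\ e) by rewrite setD1K.
have cS' : #|S :\ e| = k by move: cS; rewrite (cardsD1 e S) eS add1n => -[].
have fS' : forest src dst (S :\ e) by apply: forest_sub fS _; exact: subD1set.
have := IH _ cS' fS'; rewrite (ncompU1 _ e) -eq.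
have nc : ~~ connect (adj (S :\ e)) (src e) (dst e).
  apply/negP => c; have [|ds [ci _ _]] := circle_of_connect _ c.
    by rewrite !inE eqxx.
  by apply: (fS _); rewrite {1}eq; exact: ci.
by rewrite nc cS cS'; lia.
Qed.

Lemma spanning_forest (F : {set E}) : exists S, [/\ S \subset F, forest src dst S &
  connect (adj S) =2 connect (adj F)].
Proof.
move: {2}#|F| (erefl #|F|) => k; elim: k F => [|k IH] F cF.
  move/eqP: cF; rewrite cards_eq0 => /eqP->; exists set0; split => //.
  move=> c [c1 _ c3 _ _]; case: c c1 c3 => [|a c] // _ /(_ a.1 (mem_head _ _)).
  by rewrite inE.
have [e eF] : exists e, e \in F by apply/set0Pn; rewrite -card_gt0 cF.
have eq : F = e |: (F :\ e) by rewrite setD1K.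
have cF' : #|F :\ e| = k by move: cF; rewrite (cardsD1 e F) eF add1n => -[].
have [S [sS fS cS]] := IH _ cF'.
have eS : e \notin S by apply/negP => /(subsetP sS); rewrite !inE eqxx.
have subF : F :\ e \subset F by exact: subD1set.
have [c|nc] := boolP (connect (adj S) (src e) (dst e)).
  exists S; split => //; first exact: subset_trans subF.
  move=> x y; apply/idP/idP => [|].
    by move/(connect_mono (subset_trans sS subF)).
  rewrite eq; apply: connect_sub x y => x y; rewrite adjU1 => /orP[|].
    case/orP => /andP[/eqP <- /eqP <-] //; by rewrite csym.
  by move=> H; rewrite cS; apply: connect1.
exists (e |: S); split.
- by rewrite eq; apply: setUS.
- exact: forest_add.
- move=> x y; apply/idP/idP.
    by apply: connect_mono; rewrite eq; apply: setUS.
  rewrite eq; apply: connect_sub x y => x y; rewrite adjU1 => /orP[H|H].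
    by apply: connect1; rewrite adjU1 H.
  have : connect (adj S) x y by rewrite cS; exact: connect1.
  by apply: connect_mono; apply/subsetP => z zS; rewrite in_setU1 zS orbT.
Qed.

Lemma sub_card (S : {set E}) k : (k <= #|S|)%N -> exists S', S' \subset S /\ #|S'| = k.
Proof.
move=> km; have [m cS] : exists m, #|S| = m by eexists.
rewrite cS in km; elim: m S cS km => [|m IH] S cS km.
  by exists S; split => //; lia.
have [->|nk] := eqVneq k m.+1; first by exists S.
have [e eS] : exists e, e \in S by apply/set0Pn; rewrite -card_gt0 cS.
have cS' : #|S :\ e| = m by move: cS; rewrite (cardsD1 e S) eS add1n => -[].
have [|S' [s c]] := IH _ cS'.
  by move/eqP: nk; lia.
by exists S'; split => //; apply: subset_trans s (subD1set _ _).
Qed.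

End Graph.


Section Geo.
Variables (R : realType) (n d : nat) (E : finType)
          (src dst : E -> 'I_n) (phi : E -> R) (Q : 'I_n -> 'rV[R]_d).
Hypothesis loopless : forall e, src e != dst e.
Implicit Types (S : {set E}) (a : E * bool) (P : 'rV[R]_d).

Local Notation adj := (adjE src dst).
Local Notation dtl := (dtail src dst).
Local Notation dhd := (dhead src dst).
Local Notation dg := (dgain phi).
Local Notation circ := (circle src dst).
Local Notation Rd := (fun a b : E * bool => dhd a == dtl b).
Local Notation H := (hyp src dst phi Q).

Definition fP P (i : 'I_n) : R := sqdist P (Q i).

Lemma dg_hyp P a : H a.1 P -> dg a = fP P (dtl a) - fP P (dhd a).
Proof.
rewrite /hyp /psi /dgain /dtail /dhead /fP; case: a => e [] /= <- //.
by rewrite opprB.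
Qed.

Lemma telescope P a0 l : path Rd a0 l -> (forall b, b \in l -> H b.1 P) ->
  \sum_(b <- l) dg b = fP P (dhd a0) - fP P (dhd (last a0 l)).
Proof.
elim: l a0 => [|b l IH] a0 /=; first by rewrite big_nil subrr.
move=> /andP[/eqP hb pl] hl; rewrite big_cons (IH b) //; last first.
  by move=> x xl; apply: hl; rewrite inE xl orbT.
rewrite (@dg_hyp P); last by apply: hl; rewrite mem_head.
have -> : fP P (dtl b) = fP P (dhd a0) by rewrite hb.
by rewrite addrA subrK.
Qed.

Lemma balanced_point (X : {set E}) P : (forall e, e \in X -> H e P) -> balanced src dst phi X.
Proof.
move=> hX [|a l] [c1 _ c3 _ c5] //.
have -> : \sum_(b <- a :: l) dg b = \sum_(b <- rcons l a) dg b.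
  by apply: perm_big; rewrite perm_sym perm_rcons.
move: c5; rewrite /cycle => pa; rewrite (@telescope P _ _ pa).
  by rewrite last_rcons subrr.
move=> b; rewrite mem_rcons => bl; apply: hX; apply: c3; exact: map_f.
Qed.

Lemma flat_point S e P : e \notin S -> connect (adj S) (src e) (dst e) ->
  (forall g, g \in S -> H g P) -> balanced src dst phi (e |: S) -> H e P.
Proof.
move=> eS c hS bal.
have [ds [ci sub [pa lst]]] := circle_of_connect loopless eS c.
have := bal _ ci; rewrite big_cons (@telescope P _ _ pa).
  rewrite lst /dgain /= /hyp /psi => h.
  apply/eqP; rewrite -subr_eq0; apply/eqP; rewrite -[0]oppr0 -h /fP /dhead /=.
  ring.
by move=> b bds; apply: hS; apply: sub; exact: map_f.
Qed.


Definition dot (X Y : 'rV[R]_d) : R := \sum_k X 0 k * Y 0 k.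
Definition nrm (X : 'rV[R]_d) := dot X X.

Lemma psi_lin i j P :
  psi Q i j P = 2 * dot P (Q j - Q i) + nrm (Q i) - nrm (Q j).
Proof.
rewrite /psi /sqdist /nrm /dot mulr_sumr -big_split -!sumrB /=.
by apply: eq_bigr => k _; rewrite !mxE; ring.
Qed.

Definition pr (e : E) : 'I_n * 'I_n :=
  if (src e < dst e)%N then (src e, dst e) else (dst e, src e).

Lemma pr_lt e : ((pr e).1 < (pr e).2)%N.
Proof.
rewrite /pr; case: ifP => //= /negbT; rewrite -leqNgt leq_eqVlt => /orP[|//].
by move=> /eqP/val_inj h; move: (loopless e); rewrite h eqxx.
Qed.

Lemma pr_eq e i j : (pr e == (i, j)) || (pr e == (j, i)) =
  ((src e == i) && (dst e == j)) || ((src e == j) && (dst e == i)).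
Proof.
rewrite /pr; case: ifP => _; rewrite !xpair_eqE //.
by case: (src e == i); case: (dst e == j); case: (src e == j); case: (dst e == i).
Qed.

Lemma solve_forest S : ideal_general_position Q -> forest src dst S ->
  (#|S| <= d)%N -> forall t : E -> R,
  exists P, forall e, e \in S -> psi Q (src e) (dst e) P = t e.
Proof.
move=> [_ igp] fS Sd t.
set T := [set pr e | e in S].
have Tlt : forall p, p \in T -> (p.1 < p.2)%N.
  by move=> p /imsetP[e _ ->]; apply: pr_lt.
have hrank := igp T Tlt.
have cT : ncompT T = ncompE src dst S.
  rewrite /ncompT /ncompE; apply: eq_n_comp; apply: eq_connect => i j.
  rewrite /adjE; apply/idP/idP.
    case/orP => /imsetP[e eS ep]; apply/existsP; exists e; rewrite eS /=;
      rewrite -pr_eq ep !eqxx ?orbT //.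
  case/existsP => e /andP[eS]; rewrite -pr_eq => /orP[] /eqP ep.
    by apply/orP; left; apply/imsetP; exists e.
  by apply/orP; right; apply/imsetP; exists e.
have cnt := forest_count loopless fS.
have hr : \rank (\sum_(p in T) <<Q p.2 - Q p.1>>)%MS = #|S|.
  rewrite hrank cT; have -> : (n - ncompE src dst S = #|S|)%N by lia.
  by apply/minn_idPl.
pose M : 'M[R]_(#|S|, d) :=
  \matrix_(i, j) (Q (dst (enum_val i)) - Q (src (enum_val i))) 0 j.
have sub : (\sum_(p in T) <<Q p.2 - Q p.1>> <= M)%MS.
  apply/sumsmx_subP => p /imsetP[e eS ->]; rewrite genmxE.
  have h : (Q (dst e) - Q (src e) <= M)%MS.
    have -> : Q (dst e) - Q (src e) = row (enum_rank_in eS e) M.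
      by apply/rowP => j; rewrite !mxE enum_rankK_in.
    exact: row_sub.
  by rewrite /pr; case: ifP => _ //=; rewrite -opprB eqmx_opp.
have rM : \rank M = #|S|.
  by apply/eqP; rewrite eqn_leq rank_leq_row /= -{1}hr; exact: mxrankS sub.
have full : row_full M^T by rewrite /row_full mxrank_tr rM.
pose tv : 'rV[R]_#|S| := \row_i ((t (enum_val i) - nrm (Q (src (enum_val i)))
   + nrm (Q (dst (enum_val i)))) / 2).
have /submxP[D hD] := submx_full tv full.
exists D => e eS; rewrite psi_lin.
have : tv 0 (enum_rank_in eS e) = (D *m M^T) 0 (enum_rank_in eS e) by rewrite -hD.
rewrite !mxE enum_rankK_in // => h.
have -> : dot D (Q (dst e) - Q (src e)) =
    (t e - nrm (Q (src e)) + nrm (Q (dst e))) / 2.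
  rewrite h /dot; apply: eq_bigr => k _; rewrite !mxE enum_rankK_in //.
by field.
Qed.

End Geo.


Lemma memEof (R : realType) (n d : nat) (E : finType)
    (src dst : E -> 'I_n) (phi : E -> R) (Q : 'I_n -> 'rV[R]_d) s e :
  e \in Eof src dst phi Q s <-> (forall P, s P -> hyp src dst phi Q e P).
Proof. by rewrite inE; split => [/asboolP|h]; [|apply/asboolP]. Qed.

Lemma balanced_sub (n : nat) (E : finType) (R : realType)
    (src dst : E -> 'I_n) (phi : E -> R) (A B : {set E}) :
  A \subset B -> balanced src dst phi B -> balanced src dst phi A.
Proof.
move=> /subsetP AB bB c [c1 c2 c3 c4 c5]; apply: bB; split => //.
by move=> x /c3 /AB.
Qed.

Unset Implicit Arguments.
Theorem proposition6p2 (R : realType) (n d : nat) (E : finType)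
    (src dst : E -> 'I_n) (phi : E -> R) (Q : 'I_n -> 'rV[R]_d) :
  (forall e, src e != dst e) ->
  ideal_general_position Q ->
  (forall S : {set E}, forest src dst S -> #|S| = d.+1 ->
     ~ (exists P, inter src dst phi Q S P)) ->
  general_position src dst phi Q.
Proof.
move=> loopless igp hfor.
have span_card : forall F : {set E}, exists S : {set E}, [/\ S \subset F, forest src dst S,
    connect (adjE src dst S) =2 connect (adjE src dst F) &
    #|S| = rankE src dst F].
  move=> F; have [S [sS fS cS]] := spanning_forest src dst F.
  exists S; split => //; have := forest_count loopless fS.
  rewrite /rankE /ncompE (eq_n_comp cS); lia.
split.
- move=> s [[P0 sP0] [A hA]].
  set F := Eof src dst phi Q s.
  have hF : forall e, e \in F -> hyp src dst phi Q e P0.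
    by move=> e /memEof; apply.
  split; first split.
  + exact: balanced_point hF.
  + move=> e eF c bal; move/negP: (eF); apply; apply/memEof => P sP.

    apply: (flat_point loopless eF c _ bal).
    by move=> g /memEof; apply.
  + have [S [sS fS cS cardS]] := span_card F.
    rewrite leqNgt; apply/negP => lt.
    have [S' [s' c']] : exists S' : {set E}, S' \subset S /\ #|S'| = d.+1.
      by apply: sub_card; rewrite cardS.
    apply: (hfor S' (forest_sub fS s') c'); exists P0 => e eS'.
    by apply: hF; apply: (subsetP sS); apply: (subsetP s').
- move=> F [bF flF] rF.
  have [S [sS fS cS cardS]] := span_card F.
  have Sd : (#|S| <= d)%N by rewrite cardS.
  have [P1 hP1] := solve_forest loopless igp fS Sd phi.
  have interSF : forall P, (forall e, e \in S -> hyp src dst phi Q e P) ->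
      inter src dst phi Q F P.
    move=> P hS e eF.
    have [eS|eS] := boolP (e \in S); first exact: hS.
    have c : connect (adjE src dst S) (src e) (dst e).
      rewrite cS; apply: connect1; apply/existsP; exists e; by rewrite eF !eqxx.
    have b : balanced src dst phi (e |: S).
      by apply: balanced_sub bF; apply/subsetP => x; rewrite in_setU1 => /orP[/eqP->|/(subsetP sS)].
    exact (flat_point loopless eS c hS b).
  have iF1 : inter src dst phi Q F P1 by apply: interSF => e eS; apply: hP1.
  exists (inter src dst phi Q F); split; first by split; [exists P1 | exists F].
  apply/setP => e; apply/idP/idP; last first.
    by move=> eF; apply/memEof => P; apply.
  move/memEof => he; apply/negPn/negP => eF.
  have [c|nc] := boolP (connect (adjE src dst F) (src e) (dst e)).
    apply: (flF e eF c); apply: (balanced_point (P := P1)) => g.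
    by rewrite in_setU1 => /orP[/eqP->|/iF1]; [apply: he|].
  have eS : e \notin S by apply: contra eF; apply: (subsetP sS).
  have fS' : forest src dst (e |: S).
    by apply: forest_add => //; rewrite cS.
  have cS' : #|e |: S| = (#|S|).+1 by rewrite cardsU1 eS.
  have [lt|eq] : (#|S| < d)%N \/ #|S| = d.
    by move: rF; rewrite -cardS; lia.
  + have Sd' : (#|e |: S| <= d)%N by rewrite cS'.
    have [P2 hP2] := solve_forest loopless igp fS' Sd'
        (fun g => if g == e then phi e + 1 else phi g).
    have h2 : hyp src dst phi Q e P2.
      apply: he; apply: interSF => g gS; rewrite /hyp hP2 ?in_setU1 ?gS ?orbT //.
      by case: eqP => // ge; move: eS; rewrite -ge gS.
    move: h2; rewrite /hyp hP2 ?setU11 // eqxx => /eqP.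
    by rewrite -subr_eq0 addrC addKr oner_eq0.
  + apply: (hfor _ fS'); first by rewrite cS' eq.
    exists P1 => g; rewrite in_setU1 => /orP[/eqP->|gS]; [exact: he | exact: hP1].
- move=> s t [_ [A hA]] [_ [B hB]]; split.
  + move=> ts; apply/subsetP => e /memEof he; apply/memEof => P tP.
    exact/he/ts.
  + move=> /subsetP sub P tP; apply/hA => e eA.
    have : e \in Eof src dst phi Q s by apply/memEof => P' sP'; apply: (proj1 (hA P') sP').
    by move/sub/memEof; apply.
Qed.
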